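(* Let $V$ be a $3$-dimensional vector space over an algebraically closed field $k$ with $\mathrm{char}\,k\ne 2$, let $\zeta\in GL(V)$, and let $G(\zeta)=\{\varphi\in GL(V)\mid \varphi\zeta\varphi^{-1}\text{ is a scalar multiple of }\zeta\}$. Then $G(\zeta)$ either coincides with the centralizer $C(\zeta)$ of $\zeta$ in $GL(V)$ or contains $C(\zeta)$ as a subgroup of index $3$. In the latter case $\mathrm{char}\,k\ne3$ and $\zeta$ has three distinct characteristic roots $\alpha_1,\alpha_2,\alpha_3$ such that $\alpha_1\alpha_2^{-1}=\alpha_2\alpha_3^{-1}=\alpha_3\alpha_1^{-1}=\epsilon$, where $\epsilon$ is a primitive cube root of $1$. *)

(* Defs.v *)
(* V = k^3 represented by 3x3 matrices over k. *)
From mathcomp Require Import all_boot all_order all_algebra.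
Set Implicit Arguments. Unset Strict Implicit. Unset Printing Implicit Defensive.
Import GRing.Theory.
Local Open Scope ring_scope.

Definition Gz (k : fieldType) (z : 'M[k]_3) (phi : 'M[k]_3) : Prop :=
  phi \in unitmx /\ exists c : k, phi *m z *m invmx phi = c *: z.

Definition Cz (k : fieldType) (z : 'M[k]_3) (phi : 'M[k]_3) : Prop :=
  phi \in unitmx /\ phi *m z = z *m phi.

(* H is a subgroup of index n of the group G (subsets of GL_3(k)):
   H is contained in G and G is the disjoint union of n left cosets f i H. *)
Definition index_in (k : fieldType) (n : nat) (H G : 'M[k]_3 -> Prop) : Prop :=
  exists f : 'I_n -> 'M[k]_3,
    (forall i, G (f i)) /\
    (forall i j, i != j -> ~ H (invmx (f i) *m f j)) /\
    (forall phi, G phi -> exists i, H (invmx (f i) *m phi)).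

(* Main.v *)
Require Import Defs.
From mathcomp Require Import all_boot all_order all_algebra.
From mathcomp Require Import ring.
From Stdlib Require Import Classical_Prop.
Import GRing.Theory.
Local Open Scope ring_scope.

Section Aux.
Variable k : fieldType.
Variable z : 'M[k]_3.
Hypothesis zU : z \in unitmx.

Definition rel (A : 'M[k]_3) (d : k) := A *m z = d *: (z *m A).

Lemma Gz_rel A : Gz z A <-> A \in unitmx /\ exists d, rel A d.
Proof.
split.
  case=> AU [d Hd]; split=> //; exists d; rewrite /rel.
  have := congr1 (mulmx^~ A) Hd.
  by rewrite -!mulmxA mulVmx // mulmx1 -scalemxAl.
case=> AU [d Hd]; split=> //; exists d.
by rewrite Hd -scalemxAl -mulmxA mulmxV // mulmx1.
Qed.

Lemma mx_scale_eq1 (M : 'M[k]_3) m : M \in unitmx -> m *: M = M -> m = 1.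
Proof.
move=> MU H; apply/eqP; rewrite -subr_eq0; apply/eqP.
have : (m - 1) *: M = 0 by rewrite scalerBl scale1r H subrr.
move/eqP; rewrite scaler_eq0 => /orP [/eqP //|/eqP M0].
by move: MU; rewrite M0 unitmxE det0 unitr0.
Qed.

Lemma rel_C X m : X \in unitmx -> rel X m -> (Cz z X <-> m = 1).
Proof.
move=> XU H; split.
  case=> _ HC; apply: (@mx_scale_eq1 (z *m X)); first by rewrite unitmx_mul zU.
  by rewrite -H HC.
by move=> m1; split=> //; rewrite H m1 scale1r.
Qed.

Lemma rel_det A d : A \in unitmx -> rel A d -> d ^+ 3 = 1.
Proof.
move=> AU H; have := congr1 determinant H.
rewrite detZ !det_mulmx mulrC => E.
have nz : \det z * \det A != 0.
  by rewrite mulf_neq0 // -unitfE -unitmxE.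
apply/eqP; rewrite -subr_eq0; apply/eqP.
have : (d ^+ 3 - 1) * (\det z * \det A) = 0 by rewrite mulrBl mul1r -E subrr.
by move/eqP; rewrite mulf_eq0 (negbTE nz) orbF => /eqP.
Qed.

Lemma rel_mul A B d e : rel A d -> rel B e -> rel (A *m B) (d * e).
Proof.
move=> HA HB; rewrite /rel -mulmxA HB -scalemxAr [A *m (z *m B)]mulmxA HA.
by rewrite -scalemxAl scalerA [e * d]mulrC mulmxA.
Qed.

Lemma rel_inv A d : A \in unitmx -> d != 0 -> rel A d -> rel (invmx A) d^-1.
Proof.
move=> AU d0 H; rewrite /rel.
have E : z *m invmx A = d *: (invmx A *m z).
  have := congr1 (fun M => invmx A *m M *m invmx A) H.
  rewrite /= mulmxA mulVmx // mul1mx -scalemxAr -scalemxAl.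
  by rewrite -[invmx A *m (z *m A) *m _]mulmxA -[z *m A *m _]mulmxA mulmxV // mulmx1.
by rewrite E scalerA mulVf // scale1r.
Qed.

Lemma rel_exp A d i : rel A d -> rel (A ^+ i) (d ^+ i).
Proof.
move=> H; elim: i => [|i IH].
  by rewrite /rel !expr0 mul1mx scale1r -[1 : 'M_3]/(1%:M) mulmx1.
rewrite !exprS; exact: rel_mul.
Qed.

End Aux.
Arguments rel_det {k z} zU {A d}.
Arguments rel_C {k z} zU {X m}.
Arguments rel_mul {k z A B d e}.
Arguments rel_inv {k z A d}.
Arguments rel_exp {k z A d}.

Lemma unitmx_exp {k : fieldType} i {A : 'M[k]_3} : A \in unitmx -> A ^+ i \in unitmx.
Proof. move=> AU; exact: (@unitrX _ A i AU). Qed.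

Lemma prim3 {k : fieldType} {c : k} : c ^+ 3 = 1 -> c != 1 -> 3.-primitive_root c.
Proof.
move=> c3 c1; have [m pm] := prim_order_exists (isT : (0 < 3)%N) c3.
have m0 := prim_order_gt0 pm.
case: m pm m0 => [|[|[|[|m]]]] //= pm _ dv.
all: try by move: (prim_expr_order pm); rewrite expr1 => /eqP; rewrite (negbTE c1).
all: try by move/dvdn_leq: dv => /(_ isT).
Qed.

Theorem lemma4p3 (k : closedFieldType) (z : 'M[k]_3) :
  ~~ (2%N \in [pchar k]) -> z \in unitmx ->
  (forall phi, Gz z phi <-> Cz z phi) \/
  ((forall phi, Cz z phi -> Gz z phi) /\ index_in 3 (Cz z) (Gz z) /\
   ~~ (3%N \in [pchar k]) /\
   exists a1 a2 a3 eps : k,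
     [/\ root (char_poly z) a1, root (char_poly z) a2, root (char_poly z) a3
       & [/\ a1 != a2, a2 != a3 & a1 != a3]] /\
     3.-primitive_root eps /\
     a1 / a2 = eps /\ a2 / a3 = eps /\ a3 / a1 = eps).
Proof.
move=> _ zU.
have CG : forall phi, Cz z phi -> Gz z phi.
  move=> phi [pU HC]; apply/Gz_rel; split=> //; exists 1.
  by rewrite /rel HC scale1r.
case: (Classical_Prop.classic (exists phi, Gz z phi /\ ~ Cz z phi)) => [[phi [Gp nCp]]|nex]; last first.
  left=> phi; split; last exact: CG.
  move=> Gp; apply: Classical_Prop.NNPP => nC; apply: nex; by exists phi.
right; split=> //.
have [pU [c Hc]] := proj1 (@Gz_rel _ z phi) Gp.
have c3 := rel_det zU pU Hc.
have c1 : c != 1.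
  by apply/eqP => c1; apply: nCp; apply/(rel_C zU pU Hc).
have pc := prim3 c3 c1.
have c0 : c != 0.
  by apply/eqP => c0; move: c3; rewrite c0 expr0n /= => /eqP; rewrite eq_sym oner_eq0.
have c2 : c ^+ 2 != 1.
  by rewrite -(expr0 c) (eq_prim_root_expr pc).
have cc2 : c != c ^+ 2.
  by rewrite -{1}(expr1 c) (eq_prim_root_expr pc).
split.
  exists (fun i : 'I_3 => phi ^+ i); split; [|split].
  - move=> i; apply/Gz_rel; split; first by rewrite unitmx_exp.
    by exists (c ^+ i); apply: rel_exp.
  - move=> i j ij.
    have ciU : c ^+ i != 0 by rewrite expf_neq0.
    have H := rel_mul (rel_inv (unitmx_exp i pU) ciU (rel_exp i Hc)) (rel_exp j Hc).
    rewrite (rel_C zU _ H); last by rewrite unitmx_mul unitmx_inv !unitmx_exp.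
    move=> E; have : c ^+ i == c ^+ j by rewrite -[c ^+ j](mulVKf ciU) E mulr1.
    rewrite (eq_prim_root_expr pc) !modn_small // => /eqP /val_inj E'.
    by rewrite E' eqxx in ij.
  - move=> psi /Gz_rel [sU [e He]].
    have [i Ei] := prim_rootP pc (rel_det zU sU He).
    exists i.
    have ciU : c ^+ i != 0 by rewrite expf_neq0.
    have H := rel_mul (rel_inv (unitmx_exp i pU) ciU (rel_exp i Hc)) He.
    rewrite (rel_C zU _ H); last by rewrite unitmx_mul unitmx_inv !unitmx_exp.
    by rewrite Ei mulVf.
split.
  apply/negP; rewrite inE /= => /eqP h3.
  have : (c - 1) ^+ 3 = c ^+ 3 - 1 - 3%:R * (c ^+ 2 - c) by ring.
  rewrite h3 mul0r subr0 c3 subrr => /eqP; rewrite expf_eq0 /= subr_eq0.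
  by rewrite (negbTE c1).
have [a ra] : exists a, root (char_poly z) a.
  by apply/closed_rootP; rewrite size_char_poly.
have a0 : a != 0.
  apply: contraTneq ra => ->; rewrite -eigenvalue_root_char.
  apply/eigenvalueP => [[v Hv v0]].
  move: Hv; rewrite scale0r => /(congr1 (mulmx^~ (invmx z))).
  by rewrite -mulmxA mulmxV // mulmx1 mul0mx => /eqP; rewrite (negbTE v0).
have clos : forall b, root (char_poly z) b -> root (char_poly z) (c * b).
  move=> b; rewrite -!eigenvalue_root_char => /eigenvalueP [v Hv v0].
  apply/eigenvalueP; exists (v *m phi).
    by rewrite -mulmxA Hc -scalemxAr mulmxA Hv -scalemxAl scalerA.
  apply: contra v0 => /eqP H; apply/eqP.
  by have := congr1 (mulmx^~ (invmx phi)) H; rewrite -mulmxA mulmxV // mulmx1 mul0mx.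
exists a, (c ^+ 2 * a), (c * a), c; split.
  split.
  - exact: ra.
  - by rewrite expr2 -mulrA; exact: (clos _ (clos _ ra)).
  - exact: (clos _ ra).
  split.
  - by rewrite -{1}(mul1r a) (can_eq (mulfK a0)) eq_sym.
  - by rewrite (can_eq (mulfK a0)) eq_sym.
  - by rewrite -{1}(mul1r a) (can_eq (mulfK a0)) eq_sym.
split=> //.
have c2i : (c ^+ 2)^-1 = c.
  by apply: (@mulfI _ (c ^+ 2)); rewrite ?expf_neq0 // mulfV ?expf_neq0 // -exprSr c3.
split; last split.
- by rewrite invfM c2i mulrCA mulfV // mulr1.
- by rewrite -mulf_div divff // mulr1 expr2 mulfK.
- by rewrite mulfK.
Qed.
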